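(* Let $D$ be an orthogonal design of order $n$ and type $(s_1,\ldots,s_u)$ in variables $x_1,\ldots,x_u$ with $i$-th column $d_i$, let $W$ be a weighing matrix of order $n$ and weight $k$ with $i$-th column $w_i$, and put $C_i=w_id_i^\top$ for $i\in\{1,\ldots,n\}$. Let $L=(l(i,j))_{i,j=1}^n$ be a Latin square of order $n$ on the symbols $\{1,\ldots,n\}$. Then the $n^2\times n^2$ block matrix $\tilde D=(C_{l(i,j)})_{i,j=1}^n$ is an orthogonal design of order $n^2$ and type $(ks_1,\ldots,ks_u)$.
   Context: A weighing matrix of order $n$ and weight $k$ is an $n\times n$ $(0,1,-1)$-matrix $W$ with $WW^\top=kI_n$. An orthogonal design of order $n$ and type $(s_1,\ldots,s_u)$ in distinct commuting real indeterminates $x_1,\ldots,x_u$ is an $n\times n$ matrix $D$ with entries in $\{0,\pm x_1,\ldots,\pm x_u\}$ such that $DD^\top=(s_1x_1^2+\cdots+s_ux_u^2)I_n$. *)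

(* Defs.v *)
From HB Require Import structures.
From mathcomp Require Import all_boot all_order all_algebra.
From mathcomp Require Import mpoly.
Set Implicit Arguments. Unset Strict Implicit. Unset Printing Implicit Defensive.
Import Order.TTheory GRing.Theory Num.Theory.
Local Open Scope ring_scope.

Definition is_weighing (n k : nat) (W : 'M[int]_n) : Prop :=
  (forall i j, W i j = 0 \/ W i j = 1 \/ W i j = -1) /\
  W *m W^T = (k%:R : int)%:M.

Definition is_OD (u m : nat) (s : 'I_u -> nat) (D : 'M[{mpoly int[u]}]_m) : Prop :=
  (forall i j, D i j = 0 \/ exists v : 'I_u, D i j = 'X_v \/ D i j = - 'X_v) /\
  D *m D^T = (\sum_(v < u) (s v)%:R * 'X_v ^+ 2)%:M.

(* Latin square of order n on the symbols 'I_n (symbol l stands for l+1):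
   every symbol occurs exactly once in each row and in each column. *)
Definition is_latin (n : nat) (L : 'I_n -> 'I_n -> 'I_n) : Prop :=
  (forall i, bijective (L i)) /\ (forall j, bijective (fun i => L i j)).

Definition Cmat (u n : nat) (W : 'M[int]_n) (D : 'M[{mpoly int[u]}]_n) (i : 'I_n)
  : 'M[{mpoly int[u]}]_n :=
  col i (map_mx (fun z : int => z%:~R) W) *m (col i D)^T.

Lemma sum_const_nn (n : nat) : (\sum_(i < n) n = n * n)%N.
Proof. by rewrite big_const_ord iter_addn_0. Qed.

Definition Dtilde (u n : nat) (W : 'M[int]_n) (D : 'M[{mpoly int[u]}]_n)
  (L : 'I_n -> 'I_n -> 'I_n) : 'M[{mpoly int[u]}]_(n * n) :=
  castmx (sum_const_nn n, sum_const_nn n)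
    (\mxblock_(i < n, j < n) Cmat W D (L i j)).

(* Main.v *)
Require Import Defs.
From HB Require Import structures.
From mathcomp Require Import all_boot all_order all_algebra.
From mathcomp Require Import mpoly.
Set Implicit Arguments. Unset Strict Implicit. Unset Printing Implicit Defensive.
Import Order.TTheory GRing.Theory Num.Theory.
Local Open Scope ring_scope.

Lemma castmx_mulmx (R : pzSemiRingType) m1 n1 p1 m2 n2 p2 (em : m1 = m2) (en : n1 = n2) (ep : p1 = p2)
  (A : 'M[R]_(m1, n1)) (B : 'M[R]_(n1, p1)) :
  castmx (em, en) A *m castmx (en, ep) B = castmx (em, ep) (A *m B).
Proof. by case: m2 / em; case: n2 / en; case: p2 / ep; rewrite !castmx_id. Qed.

Lemma castmx_scalar (R : pzSemiRingType) m1 m2 (em : m1 = m2) (a : R) :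
  castmx (em, em) a%:M = a%:M.
Proof. by case: m2 / em; rewrite castmx_id. Qed.

Section S.
Variables (u n : nat) (W : 'M[int]_n) (D : 'M[{mpoly int[u]}]_n).

Lemma C_mul a b :
  Cmat W D a *m (Cmat W D b)^T =
  (D^T *m D) a b *: (col a (map_mx (fun z : int => z%:~R) W) *m (col b (map_mx (fun z : int => z%:~R) W))^T).
Proof.
rewrite /Cmat trmx_mul trmxK mulmxA -(mulmxA _ _ (col b D)).
have -> : (col a D)^T *m col b D = ((D^T *m D) a b)%:M.
  by apply/matrixP => i j; rewrite !ord1 !mxE; apply: eq_bigr => t _; rewrite !mxE.
by rewrite mul_mx_scalar -scalemxAl.
Qed.

Lemma DtD (f : {mpoly int[u]}) : D *m D^T = f%:M -> (forall i j, D i j = 0 \/ exists v : 'I_u, D i j = 'X_v \/ D i j = - 'X_v) ->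
  D^T *m D = f%:M.
Proof.
move=> hD hE.
have [f0|fn0] := eqVneq f 0.
  have D0 : D = 0.
    apply/matrixP => i j; rewrite mxE.
    have := congr1 (fun M : 'M[{mpoly int[u]}]_n => (M i i).@[fun _ => 1]) hD.
    rewrite f0 !mxE eqxx mulr1n meval0 rmorph_sum /=.
    move/eqP; rewrite psumr_eq0; last by move=> t _; rewrite !mxE rmorphM /= -expr2 sqr_ge0.
    move/allP/(_ j (mem_index_enum _)) => /implyP /(_ isT).
    rewrite !mxE rmorphM /= mulf_eq0 orbb.
    case: (hE i j) => [->//|[v [->|->]]]; by rewrite ?mevalN mevalXU ?oppr_eq0 oner_eq0.
  by rewrite D0 f0 trmx0 mul0mx; apply/matrixP => ? ?; rewrite !mxE mul0rn.
have dn0 : \det D != 0.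
  have := congr1 determinant hD; rewrite det_mulmx det_tr det_scalar => e.
  apply/eqP => d0; move: e; rewrite d0 mul0r => /esym/eqP.
  by rewrite expf_eq0 (negPf fn0) andbF.
apply/matrixP => i j.
apply: (mulfI dn0).
have h1 : \det D *: D^T = f *: \adj D.
  by rewrite -mul_scalar_mx -mul_adj_mx -mulmxA hD mul_mx_scalar.
have := congr1 (fun M : 'M[{mpoly int[u]}]_n => (M *m D) i j) h1.
rewrite -scalemxAl -scalemxAl mul_adj_mx !mxE => ->.
by rewrite !mulrnAr mulrC.
Qed.
End S.
Lemma WWt u n k (W : 'M[int]_n) : W *m W^T = (k%:R : int)%:M ->
  \sum_a (col a (map_mx (fun z : int => (z%:~R : {mpoly int[u]})) W) *m
         (col a (map_mx (fun z : int => (z%:~R : {mpoly int[u]})) W))^T) = (k%:R)%:M.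
Proof.
move=> hW; apply/matrixP => r c.
have := congr1 (fun M : 'M[int]_n => (M r c)%:~R : {mpoly int[u]}) hW.
rewrite !mxE summxE /= (raddf_sum (intmul 1)) /= => e.
have -> : (k%:R : {mpoly int[u]}) *+ (r == c) = ((k%:R : int) *+ (r == c))%:~R.
  by case: (r == c); rewrite ?mulr1n ?mulr0n ?mulrz_nat ?mul0rz.
rewrite -e; apply: eq_bigr => a _; rewrite !mxE big_ord1 !mxE intrM.
by [].
Qed.

Theorem lemma3p10 (u n k : nat) (s : 'I_u -> nat)
  (D : 'M[{mpoly int[u]}]_n) (W : 'M[int]_n) (L : 'I_n -> 'I_n -> 'I_n) :
  is_OD s D -> is_weighing k W -> is_latin L ->
  is_OD (fun v => (k * s v)%N) (Dtilde W D L).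
Proof.
move=> [hE hD] [hW hWW] [hr hc].
have DtDf := DtD hD hE.
split.
  move=> p q; rewrite /Dtilde castmxE !mxE /Cmat.
  move: (cast_ord _ p) (cast_ord _ q) => p' q'.
  rewrite big_ord1 !mxE.
  set a := L _ _; set r := tagnat.sig2 p'; set c := tagnat.sig2 q'.
  case: (hW r a) => [->|[->|->]]; rewrite ?mul0r ?mul1r; first by left.
    by apply: hE.
  rewrite mulN1r; case: (hE c a) => [->|[v [->|->]]]; rewrite ?oppr0 ?opprK; first by left.
    by right; exists v; right.
  by right; exists v; left.
rewrite /Dtilde trmx_cast castmx_mulmx -(castmx_scalar (sum_const_nn n)).
congr castmx.
rewrite tr_mxblock mul_mxblock.
rewrite -(mxdiagZ (p_ := fun _ : 'I_n => n)) /mxdiag.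
apply: eq_mxblock => i j; rewrite conform_mx_id.
under eq_bigr do rewrite C_mul DtDf mxE.
set f := \sum_(v < u) _.
set F := fun a => col a (map_mx (fun z : int => (z%:~R : {mpoly int[u]})) W) *m
         (col a (map_mx (fun z : int => (z%:~R : {mpoly int[u]})) W))^T.
have [<-|ne] := eqVneq i j.
  under eq_bigr do rewrite eqxx mulr1n.
  have e : \sum_m F (L i m) = (k%:R)%:M.
    by rewrite -(WWt u hWW); exact: esym (reindex_inj (bij_inj (hr i))).
  rewrite -scaler_sumr e scale_scalar_mx; congr scalar_mx.
  rewrite mulrC mulr_sumr; apply: eq_bigr => v _; by rewrite natrM mulrA.
apply: big1 => m _.
have : L i m != L j m by apply: contra_neq ne => e; exact: (bij_inj (hc m) e).
by move/negPf => ->; rewrite mulr0n scale0r.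
Qed.
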